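(* Let $n\ge1$, $N\ge1$, $p\in(0,1)$, and let $I:\{0,1\}^n\to\{0,1\}$ be a decoding-error indicator with error-correcting capability $t$ ($0\le t<n$, $I(\mathbf z)=0$ whenever $wt(\mathbf z)\le t$). For $q\in(0,1)$ let $\hat P_{IS}(e)=\frac1N\sum_{j=1}^N I(\mathbf z_j)W(wt(\mathbf z_j);p,q)$ with $\mathbf z_j$ i.i.d. with pmf $q^{wt(\mathbf z)}(1-q)^{n-wt(\mathbf z)}$. Then the function $q\mapsto\mathrm{var}_q[\hat P_{IS}(e)]$ is convex on $(0,1)$.
   Context: Setting: linear block code of length $n$ over a binary symmetric channel with cross-over probability $p$; all-zero codeword transmitted so the channel output is the error pattern $\mathbf z\in\{0,1\}^n$. $wt(\mathbf z)$ is the number of ones. $I(\mathbf z)=1$ iff $\mathbf z$ is erroneously decoded. $W(i;p,q)=\frac{p^i(1-p)^{n-i}}{q^i(1-q)^{n-i}}$. $\mathrm{var}_q$ is the variance when samples have pmf $q^{wt(\mathbf z)}(1-q)^{n-wt(\mathbf z)}$. *)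

(* Defs.v *)
From mathcomp Require Import all_boot all_order all_algebra.
Set Implicit Arguments. Unset Strict Implicit. Unset Printing Implicit Defensive.
Import Order.TTheory GRing.Theory Num.Theory.
Local Open Scope ring_scope.

Notation word n := {ffun 'I_n -> bool}.

Definition wt (n : nat) (z : word n) : nat := #|[pred i | z i]|.

Section Defs.
Variable R : realFieldType.

Definition W (n i : nat) (p q : R) : R :=
  p ^+ i * (1 - p) ^+ (n - i) / (q ^+ i * (1 - q) ^+ (n - i)).

Definition pmf_word (n : nat) (q : R) (z : word n) : R :=
  q ^+ wt z * (1 - q) ^+ (n - wt z).

Definition pmf_sample (n N : nat) (q : R) (zs : {ffun 'I_N -> word n}) : R :=
  \prod_(j < N) pmf_word q (zs j).

Definition P_IS (n N : nat) (I : word n -> bool) (p q : R)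
    (zs : {ffun 'I_N -> word n}) : R :=
  N%:R^-1 * \sum_(j < N) (I (zs j))%:R * W n (wt (zs j)) p q.

Definition expect (T : finType) (pmf : T -> R) (X : T -> R) : R :=
  \sum_(x : T) pmf x * X x.
Definition variance (T : finType) (pmf : T -> R) (X : T -> R) : R :=
  expect pmf (fun x => (X x - expect pmf X) ^+ 2).

Definition var_IS (n N : nat) (I : word n -> bool) (p q : R) : R :=
  variance (@pmf_sample n N q) (P_IS I p q).

End Defs.

(* Main.v *)
Require Import Defs.
From mathcomp Require Import all_boot all_order all_algebra.
From mathcomp Require Import ring lra.
Import Order.TTheory GRing.Theory Num.Theory.
Local Open Scope ring_scope.
Set Implicit Arguments. Unset Strict Implicit.
Lemma amgm (R : realFieldType) (a b : nat) (r s : R) : 0 <= r -> 0 <= s ->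
  r ^+ a * s ^+ b * (1 + a%:R * (1 - r) + b%:R * (1 - s)) <= 1.
Proof.
move=> r0 s0.
set K := (1 + _ + _).
have [K0|K0] := lerP K 0.
  have : 0 <= r ^+ a * s ^+ b by rewrite mulr_ge0 // exprn_ge0.
  move=> h; apply: (le_trans (y := 0)); last by [].
  by rewrite mulr_ge0_le0.
pose E (i : ('I_a + 'I_b) + 'I_1) : R :=
  match i with inl (inl _) => r | inl (inr _) => s | inr _ => K end.
have := leif_AGM (A := predT) (E := E).
have cardI : #|predT : {pred ('I_a + 'I_b) + 'I_1}| = (a + b).+1.
  by rewrite cardT -cardE !card_sum !card_ord addn1.
have sumE : \sum_(i in predT) E i = (a + b).+1%:R.
  rewrite big_sumType /= big_ord1 big_sumType /= !sumr_const !card_ord /K.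
  rewrite -[r *+ a]mulr_natr -[s *+ b]mulr_natr -[(a+b).+1]addn1 !natrD; ring.
have prodE : \prod_(i in predT) E i = r ^+ a * s ^+ b * K.
  by rewrite big_sumType /= big_ord1 big_sumType /= !prodr_const !card_ord.
rewrite cardI sumE prodE.
move=> H; have := (H _).1; rewrite divff ?pnatr_eq0 // expr1n; apply => i _.
case: i => [[i|i]|i] /=; [exact: r0|exact: s0|exact: ltW].
Qed.
Definition hf (R : realFieldType) (a b : nat) (y : R) := (y ^+ a * (1 - y) ^+ b)^-1.

Lemma hf_gt0 (R : realFieldType) (a b : nat) (y : R) : 0 < y < 1 -> 0 < hf a b y.
Proof.
move=> /andP[y0 y1]; rewrite /hf invr_gt0 mulr_gt0 // exprn_gt0 //; lra.
Qed.

Lemma tangent (R : realFieldType) (a b : nat) (x y : R) : 0 < x < 1 -> 0 < y < 1 ->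
  hf a b x * (1 + a%:R * ((x - y) / x) + b%:R * ((y - x) / (1 - x))) <= hf a b y.
Proof.
move=> hx hy; have := hf_gt0 a b hx.
case/andP: hx => x0 x1; case/andP: hy => y0 y1 hx.
have x0' : x != 0 by rewrite gt_eqF.
have x1' : 1 - x != 0 by rewrite gt_eqF // subr_gt0.
set r := y / x; set s := (1 - y) / (1 - x).
have e1 : (x - y) / x = 1 - r by rewrite /r; field.
have e2 : (y - x) / (1 - x) = 1 - s by rewrite /s; field.
have ey : y = x * r by rewrite /r; field.
have ey' : 1 - y = (1 - x) * s by rewrite /s; field.
have r0 : 0 < r by rewrite divr_gt0.
have s0 : 0 < s by rewrite divr_gt0 // subr_gt0.
have P0 : 0 < r ^+ a * s ^+ b by rewrite mulr_gt0 // exprn_gt0.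
have -> : hf a b y = hf a b x * (r ^+ a * s ^+ b)^-1.
  rewrite /hf ey' {1}ey !exprMn -invfM; congr (_^-1); ring.
rewrite e1 e2 ler_pM2l // -(ler_pM2l P0) mulfV ?gt_eqF //.
by apply: amgm; apply: ltW.
Qed.

Lemma hf_convex (R : realFieldType) (a b : nat) (q1 q2 lam : R) :
  0 < q1 < 1 -> 0 < q2 < 1 -> 0 <= lam <= 1 ->
  hf a b (lam * q1 + (1 - lam) * q2) <= lam * hf a b q1 + (1 - lam) * hf a b q2.
Proof.
move=> h1 h2 /andP[l0 l1].
set q := lam * q1 + (1 - lam) * q2.
have hq : 0 < q < 1.
  case/andP: h1 => a1 b1; case/andP: h2 => a2 b2.
  have c1 : 0 <= lam * (q1 - q1 * q2) by apply: mulr_ge0; nra.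
  have c2 : 0 <= (1 - lam) * (q2 - q1 * q2) by apply: mulr_ge0; nra.
  have c3 : 0 < q1 * q2 by rewrite mulr_gt0.
  have d1 : 0 <= lam * ((1 - q1) - (1 - q1) * (1 - q2)).
    by apply: mulr_ge0; nra.
  have d2 : 0 <= (1 - lam) * ((1 - q2) - (1 - q1) * (1 - q2)).
    by apply: mulr_ge0; nra.
  have d3 : 0 < (1 - q1) * (1 - q2) by rewrite mulr_gt0 // subr_gt0.
  apply/andP; split; rewrite /q; nra.
have t1 := tangent a b hq h1; have t2 := tangent a b hq h2.
case/andP: hq => q0 q1'.
have q0' : q != 0 by rewrite gt_eqF.
have q1'' : 1 - q != 0 by rewrite gt_eqF // subr_gt0.
apply: le_trans (lerD (ler_wpM2l l0 t1) (ler_wpM2l _ t2)); last by rewrite subr_ge0.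
rewrite le_eqVlt; apply/orP; left; apply/eqP.
move: q0' q1''; rewrite /q => q0' q1''; field.
by rewrite q0' q1''.
Qed.
Section Prob.
Variables (R : realFieldType) (n N : nat).

Lemma prodsum (I J : finType) (G : I -> J -> R) :
  \sum_(f : {ffun I -> J}) \prod_i G i (f i) = \prod_i \sum_j G i j.
Proof. by rewrite bigA_distr_bigA. Qed.

Lemma pmf_wordE (q : R) (z : word n) :
  pmf_word q z = \prod_(i < n) (if z i then q else 1 - q).
Proof.
symmetry; rewrite /pmf_word (bigID (fun i => z i)) /=.
rewrite (eq_bigr (fun _ => q)) => [|i ->//].
rewrite [X in _ * X = _](eq_bigr (fun _ => 1 - q)) => [|i /negbTE ->//].
rewrite !prodr_const; congr (_ * _ ^+ _).
rewrite /wt; have := cardC [pred i | z i]; rewrite card_ord => e.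
have -> : #|(fun i => ~~ z i)| = #|[predC [pred i | z i]]| by apply: eq_card.
move: e; move: (#|[predC _]|) (#|[pred i | z i]|) => x y <-; by rewrite addKn.
Qed.

Lemma sum_pw (q : R) : \sum_(z : word n) pmf_word q z = 1.
Proof.
rewrite (eq_bigr _ (fun z _ => pmf_wordE q z)) (prodsum (fun (i : 'I_n) (b : bool) => if b then q else 1 - q)).
by rewrite big1 // => i _; rewrite big_bool /= addrC subrK.
Qed.

Lemma sum_sample (q : R) (F : 'I_N -> word n -> R) :
  \sum_(zs : {ffun 'I_N -> word n}) pmf_sample q zs * \prod_i F i (zs i)
  = \prod_i \sum_z pmf_word q z * F i z.
Proof.
rewrite -prodsum; apply: eq_bigr => zs _.
by rewrite /pmf_sample -big_split.
Qed.

Lemma E0 (q : R) : \sum_(zs : {ffun 'I_N -> word n}) pmf_sample q zs = 1.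
Proof.
have := sum_sample q (fun _ _ => 1).
rewrite big1_eq (eq_bigr (fun zs => pmf_sample q zs)) => [->|zs _]; last by rewrite mulr1.
by rewrite big1 // => i _; rewrite (eq_bigr (pmf_word q)) ?sum_pw // => z _; rewrite mulr1.
Qed.

Lemma E1 (q : R) (f : word n -> R) (k : 'I_N) :
  \sum_(zs : {ffun 'I_N -> word n}) pmf_sample q zs * f (zs k)
  = \sum_z pmf_word q z * f z.
Proof.
transitivity (\sum_(zs : {ffun 'I_N -> word n})
   pmf_sample q zs * \prod_i (if i == k then f (zs i) else 1)).
  apply: eq_bigr => zs _; congr (_ * _).
  by rewrite (bigD1 k) //= eqxx big1 ?mulr1 // => i /negbTE ->.
rewrite (sum_sample q (fun i z => if i == k then f z else 1)) (bigD1 k) //= eqxx [X in _ * X]big1 ?mulr1 // => i /negbTE ->.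
by rewrite (eq_bigr (pmf_word q)) ?sum_pw // => z _; rewrite mulr1.
Qed.

Lemma E2 (q : R) (f g : word n -> R) (j k : 'I_N) : j != k ->
  \sum_(zs : {ffun 'I_N -> word n}) pmf_sample q zs * (f (zs j) * g (zs k))
  = (\sum_z pmf_word q z * f z) * (\sum_z pmf_word q z * g z).
Proof.
move=> jk.
pose F := fun i (z : word n) => if i == j then f z else if i == k then g z else 1.
have kj : (k == j) = false by rewrite eq_sym (negbTE jk).
transitivity (\sum_(zs : {ffun 'I_N -> word n})
   pmf_sample q zs * \prod_i F i (zs i)).
  apply: eq_bigr => zs _; congr (_ * _).
  rewrite (bigD1 j) //= (bigD1 k) /=; last by rewrite eq_sym.
  rewrite /F eqxx kj eqxx big1 ?mulr1 // => i /andP[/negbTE -> /negbTE ->] //.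
rewrite (sum_sample q F) (bigD1 j) //= (bigD1 k) /=; last by rewrite eq_sym.
rewrite /F eqxx kj eqxx [X in _ * (_ * X)]big1 ?mulr1 // => i /andP[/negbTE -> /negbTE ->].
by rewrite (eq_bigr (pmf_word q)) ?sum_pw // => z _; rewrite mulr1.
Qed.


Lemma var_E2 (T : finType) (pmf X : T -> R) : \sum_x pmf x = 1 ->
  variance pmf X = expect pmf (fun x => X x ^+ 2) - expect pmf X ^+ 2.
Proof.
move=> h1; rewrite /variance /expect; set m := \sum_x pmf x * X x.
have -> : \sum_x pmf x * (X x - m) ^+ 2 =
   \sum_x (pmf x * X x ^+ 2 - (2 * m) * (pmf x * X x) + m ^+ 2 * pmf x).
  by apply: eq_bigr => x _; ring.
rewrite big_split sumrB /= -!mulr_sumr h1 -/m; ring.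
Qed.

Lemma var_formula (I : word n -> bool) (p q : R) : (0 < N)%N ->
  var_IS N I p q = N%:R^-1 *
   (\sum_z pmf_word q z * ((I z)%:R * W n (wt z) p q) ^+ 2
    - (\sum_z pmf_word q z * ((I z)%:R * W n (wt z) p q)) ^+ 2).
Proof.
move=> N0.
set Y := fun z : word n => (I z)%:R * W n (wt z) p q.
set mu := \sum_z pmf_word q z * Y z.
set nu := \sum_z pmf_word q z * Y z ^+ 2.
have NN : N%:R != 0 :> R by rewrite pnatr_eq0 -lt0n.
have EX : expect (@pmf_sample R n N q) (@P_IS R n N I p q) = mu.
  rewrite /expect /P_IS.
  transitivity (N%:R^-1 * \sum_(j < N) \sum_(zs : {ffun 'I_N -> word n}) pmf_sample q zs * Y (zs j)).
    rewrite [in RHS]exchange_big /= mulr_sumr; apply: eq_bigr => zs _.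
    by rewrite mulrCA mulr_sumr.
  rewrite (eq_bigr (fun j => mu)); last by move=> j _; exact: (E1 q Y j).
  by rewrite sumr_const card_ord -[mu *+ N]mulr_natr mulrCA mulVf ?mulr1.
have EX2 : expect (@pmf_sample R n N q) (fun zs => @P_IS R n N I p q zs ^+ 2) =
    N%:R^-1 ^+ 2 * (N%:R * (mu ^+ 2 *+ N + (nu - mu ^+ 2))).
  rewrite /expect /P_IS.
  transitivity (N%:R^-1 ^+ 2 * \sum_(j < N) \sum_(k < N)
     \sum_(zs : {ffun 'I_N -> word n}) pmf_sample q zs * (Y (zs j) * Y (zs k))).
    transitivity (\sum_(zs : {ffun 'I_N -> word n}) N%:R^-1 ^+ 2 * \sum_(j < N) \sum_(k < N)
       pmf_sample q zs * (Y (zs j) * Y (zs k))).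
      apply: eq_bigr => zs _; rewrite exprMn mulrCA; congr (_ * _).
      rewrite expr2 mulr_suml mulr_sumr; apply: eq_bigr => j _.
      by rewrite mulr_sumr mulr_sumr.
    rewrite -mulr_sumr; congr (_ * _); rewrite exchange_big; apply: eq_bigr => j _.
    by rewrite exchange_big.
  congr (_ * _).
  rewrite (eq_bigr (fun j => mu ^+ 2 *+ N + (nu - mu ^+ 2))) ?sumr_const ?card_ord ?mulr_natl //.
  move=> j _.
  rewrite (eq_bigr (fun k => mu ^+ 2 + (if k == j then nu - mu ^+ 2 else 0))).
    rewrite big_split /= sumr_const card_ord; congr (_ + _).
    by rewrite (bigD1 j) //= eqxx big1 ?addr0 // => k /negbTE ->.
  move=> k _; case: eqP => [->|/eqP kj].
    rewrite addrC subrK /nu; have := E1 q (fun z => Y z ^+ 2) j => /= <-; apply: eq_bigr => zs _.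
    by rewrite expr2.
  rewrite addr0 E2 ?expr2 //; by rewrite eq_sym.
rewrite /var_IS var_E2 ?E0 // EX2 EX.
rewrite -mulr_natr; field.
exact: NN.
Qed.

End Prob.

Lemma var_hf (R : realFieldType) (n N : nat) (I : word n -> bool) (p q : R) :
  (0 < N)%N -> 0 < q < 1 ->
  var_IS N I p q = N%:R^-1 *
   (\sum_z ((I z)%:R * (p ^+ wt z * (1 - p) ^+ (n - wt z)) ^+ 2) * hf (wt z) (n - wt z) q
    - (\sum_z (I z)%:R * (p ^+ wt z * (1 - p) ^+ (n - wt z))) ^+ 2).
Proof.
move=> N0 hq; rewrite var_formula //.
have D0 : forall z : word n, pmf_word q z != 0.
  move=> z; rewrite gt_eqF // /pmf_word; case/andP: hq => q0 q1.
  by rewrite mulr_gt0 // exprn_gt0 // subr_gt0.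
congr (_ * (_ - _ ^+ 2)); apply: eq_bigr => z _; have := D0 z;
  rewrite /W /hf -/(pmf_word q z); case: (I z) => /= Dz.
- by rewrite mul1r; field.
- by rewrite !mul0r expr2 !mulr0.
- by rewrite !mul1r; field.
- by rewrite !mul0r mulr0.
Qed.

Unset Implicit Arguments.

Theorem lemma3 (R : realFieldType) (n N t : nat) (p : R) (I : word n -> bool) :
  (0 < n)%N -> (0 < N)%N -> 0 < p < 1 -> (t < n)%N ->
  (forall z : word n, (wt z <= t)%N -> I z = false) ->
  forall q1 q2 lam : R, 0 < q1 < 1 -> 0 < q2 < 1 -> 0 <= lam <= 1 ->
    var_IS N I p (lam * q1 + (1 - lam) * q2)
      <= lam * var_IS N I p q1 + (1 - lam) * var_IS N I p q2.
Proof.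
move=> n0 N0 hp tn hI q1 q2 lam h1 h2 hl.
have hq : 0 < lam * q1 + (1 - lam) * q2 < 1.
  case/andP: h1 => a1 b1; case/andP: h2 => a2 b2; case/andP: hl => l0 l1.
  have c1 : 0 <= lam * (q1 - q1 * q2) by apply: mulr_ge0; nra.
  have c2 : 0 <= (1 - lam) * (q2 - q1 * q2) by apply: mulr_ge0; nra.
  have c3 : 0 < q1 * q2 by rewrite mulr_gt0.
  have d1 : 0 <= lam * ((1 - q1) - (1 - q1) * (1 - q2)) by apply: mulr_ge0; nra.
  have d2 : 0 <= (1 - lam) * ((1 - q2) - (1 - q1) * (1 - q2)) by apply: mulr_ge0; nra.
  have d3 : 0 < (1 - q1) * (1 - q2) by rewrite mulr_gt0 // subr_gt0.
  apply/andP; split; nra.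
rewrite !var_hf //.
set M := (\sum_z _) ^+ 2.
set c := fun z : word n => (I z)%:R * (p ^+ wt z * (1 - p) ^+ (n - wt z)) ^+ 2.
have c0 : forall z, 0 <= c z.
  by move=> z; rewrite /c mulr_ge0 ?ler0n // sqr_ge0.
have key : \sum_z c z * hf (wt z) (n - wt z) (lam * q1 + (1 - lam) * q2) <=
  lam * (\sum_z c z * hf (wt z) (n - wt z) q1) +
  (1 - lam) * (\sum_z c z * hf (wt z) (n - wt z) q2).
  rewrite !mulr_sumr -big_split /=; apply: ler_sum => z _.
  apply: le_trans (ler_wpM2l (c0 z) (hf_convex (wt z) (n - wt z) h1 h2 hl)) _.
  by rewrite le_eqVlt; apply/orP; left; apply/eqP; ring.
move: key; set A := \sum_z _; set A1 := \sum_z _; set A2 := \sum_z _ => key.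
have Ni : 0 <= N%:R^-1 :> R by rewrite invr_ge0 ler0n.
have -> : lam * (N%:R^-1 * (A1 - M)) + (1 - lam) * (N%:R^-1 * (A2 - M)) =
   N%:R^-1 * ((lam * A1 + (1 - lam) * A2) - M) by ring.
by apply: ler_wpM2l => //; rewrite lerB.
Qed.
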